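(* Let $T$ be a complete theory with monster model $\mathcal{U}$, $A\subseteq\mathcal{U}$ small, $r,s\in[0,1]$ with $r+s=1$, $p\in S_x(\mathcal{U})$, and $\nu_1,\nu_2\in\mathfrak{M}_y(\mathcal{U})$ with $\operatorname{supp}(\nu_1)\cap\operatorname{supp}(\nu_2)=\emptyset$. If $\delta_p\geq_{\mathbb{E},A}\nu_1$ and $\delta_p\geq_{\mathbb{E},A}\nu_2$, then $\delta_p\geq_{\mathbb{E},Ab}r\nu_1+s\nu_2$ for some finite tuple $b$ from $\mathcal{U}$. In particular, if $q_1,\dots,q_n\in S_y(\mathcal{U})$ and $p\geq_{D,A}q_i$ for $i=1,\dots,n$, then there is a finite tuple $b$ from $\mathcal{U}$ such that $\delta_p\geq_{\mathbb{E},Ab}\sum_{i=1}^n r_i\delta_{q_i}$ for $r_i\geq0$ with $\sum_{i=1}^n r_i=1$.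
   Context: For $C\subseteq\mathcal{U}$, $\mathcal{L}_x(C)$ is the Boolean algebra of formulas in $x$ with parameters from $C$ modulo $T$, embedded in $\mathcal{L}_{xy}(C)$ via $\varphi(x)\mapsto\varphi(x)\wedge y=y$; $\mathfrak{M}_x(C)$ is the set of finitely additive probability measures on $\mathcal{L}_x(C)$. For $\omega\in\mathfrak{M}_{xy}(C)$, $\pi_x(\omega)(\varphi(x))=\omega(\varphi(x)\wedge y=y)$ (similarly $\pi_y$); $\omega|_D$ is restriction. $\delta_p$ is the Dirac measure of a type $p$. $\operatorname{supp}(\nu)$ is the set of $q\in S_y(\mathcal{U})$ with $\nu(\psi)>0$ for all $\psi\in q$. For small $C$, $\mu\geq_{\mathbb{E},C}\nu$ means there is $\lambda\in\mathfrak{M}_{xy}(C)$ with $\pi_x(\lambda)=\mu|_C$ such that every $\omega\in\mathfrak{M}_{xy}(\mathcal{U})$ with $\omega|_C=\lambda$ and $\pi_x(\omega)=\mu$ satisfies $\pi_y(\omega)=\nu$. $p\geq_{D,A}q$ means there is $r\in S_{xy}(A)$ with $p|_A\subseteq r$ and $p\cup r\vdash q$. $Ab$ denotes $A$ together with the entries of $b$. *)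

(* Defs.v *)
From Stdlib Require Fin.
From Stdlib Require Import Reals List Arith ClassicalEpsilon.
Open Scope R_scope.

Record Language := {
  Fsym : Type; Rsym : Type;
  farity : Fsym -> nat; rarity : Rsym -> nat }.

Inductive term (L : Language) : Type :=
| tvar : nat -> term L
| tapp : forall f : Fsym L, (Fin.t (farity L f) -> term L) -> term L.

Inductive formula (L : Language) : Type :=
| Feq : term L -> term L -> formula L
| Frel : forall r : Rsym L, (Fin.t (rarity L r) -> term L) -> formula L
| Fnot : formula L -> formula L
| Fand : formula L -> formula L -> formula L
| Fex : nat -> formula L -> formula L.
Arguments tvar {L} _.
Arguments tapp {L} f _.
Arguments Feq {L} _ _.
Arguments Frel {L} r _.
Arguments Fnot {L} _.
Arguments Fand {L} _ _.
Arguments Fex {L} _ _.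

Fixpoint tvars_in {L : Language} (P : nat -> Prop) (t : term L) : Prop :=
  match t with
  | tvar i => P i
  | tapp f args => forall j, tvars_in P (args j)
  end.

Fixpoint fvs_in {L : Language} (P : nat -> Prop) (phi : formula L) : Prop :=
  match phi with
  | Feq t1 t2 => tvars_in P t1 /\ tvars_in P t2
  | Frel r args => forall j, tvars_in P (args j)
  | Fnot psi => fvs_in P psi
  | Fand a b => fvs_in P a /\ fvs_in P b
  | Fex x psi => fvs_in (fun i => i = x \/ P i) psi
  end.

Definition sentence {L : Language} (phi : formula L) : Prop := fvs_in (fun _ => False) phi.

Record Structure (L : Language) := {
  dom :> Type;
  fint : forall f : Fsym L, (Fin.t (farity L f) -> dom) -> dom;
  rint : forall r : Rsym L, (Fin.t (rarity L r) -> dom) -> Prop;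
  dom_inh : inhabited dom }.
Arguments dom {L} s.
Arguments fint {L} s f _.
Arguments rint {L} s r _.

Definition upd {X : Type} (v : nat -> X) (x : nat) (a : X) : nat -> X :=
  fun i => if Nat.eqb i x then a else v i.

Fixpoint teval {L : Language} (M : Structure L) (v : nat -> M) (t : term L) : M :=
  match t with
  | tvar i => v i
  | tapp f args => fint M f (fun j => teval M v (args j))
  end.

Fixpoint sat {L : Language} (M : Structure L) (v : nat -> M) (phi : formula L) : Prop :=
  match phi with
  | Feq t1 t2 => teval M v t1 = teval M v t2
  | Frel r args => rint M r (fun j => teval M v (args j))
  | Fnot psi => ~ sat M v psi
  | Fand a b => sat M v a /\ sat M v b
  | Fex x psi => exists a : M, sat M (upd v x a) psi
  end.

Definition models {L : Language} (M : Structure L) (T : formula L -> Prop) : Prop :=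
  forall sigma, T sigma -> forall v, sat M v sigma.

Definition complete_theory {L : Language} (T : formula L -> Prop) : Prop :=
  (forall sigma, T sigma -> sentence sigma) /\
  (exists M : Structure L, models M T) /\
  (forall sigma, sentence sigma ->
     (forall M : Structure L, models M T -> forall v, sat M v sigma) \/
     (forall M : Structure L, models M T -> forall v, ~ sat M v sigma)).

(* Points of M^n are represented by valuations a : nat -> M, only a 0..a (n-1)
   matter.  The parameters ps are placed in variables n, n+1, ... *)
Definition env {L : Language} (M : Structure L) (n : nat) (a : nat -> M) (ps : list M) : nat -> M :=
  fun i => if Nat.ltb i n then a i else nth (i - n) ps (a i).

(* D is the set of realisations in M of a formula in n variables with
   parameters from C  (an element of L_x(C), |x| = n, read in M). *)
Definition definable {L : Language} {M : Structure L} (C : M -> Prop) (n : nat)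
  (D : (nat -> M) -> Prop) : Prop :=
  exists (phi : formula L) (ps : list M),
    Forall C ps /\ fvs_in (fun i => (i < n + length ps)%nat) phi /\
    forall a, D a <-> sat M (env M n a ps) phi.

Definition fullset {L : Language} (M : Structure L) : M -> Prop := fun _ => True.

Definition injective_on {X Y : Type} (A : X -> Prop) (f : X -> Y) : Prop :=
  forall a b, A a -> A b -> f a = f b -> a = b.

(* |A| < |K| *)
Definition small {L : Language} {M : Structure L} (K : Type) (A : M -> Prop) : Prop :=
  (exists f : M -> K, injective_on A f) /\
  ~ (exists g : K -> M, (forall k, A (g k)) /\ injective_on (fun _ => True) g).

Definition elementary_on {L : Language} {M : Structure L} (A : M -> Prop) (f : M -> M) : Prop :=
  forall (phi : formula L) (ps : list M), Forall A ps ->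
    fvs_in (fun i => (i < length ps)%nat) phi ->
    forall v : nat -> M,
      (sat M (fun i => nth i ps (v i)) phi <->
       sat M (fun i => nth i (map f ps) (v i)) phi).

Definition automorphism {L : Language} {M : Structure L} (s : M -> M) : Prop :=
  (exists t : M -> M, forall a, t (s a) = a /\ s (t a) = a) /\
  (forall f args, s (fint M f args) = fint M f (fun j => s (args j))) /\
  (forall r args, rint M r args <-> rint M r (fun j => s (args j))).

(* U is a monster model of the complete theory T: a model of T which is
   kappa-saturated and strongly kappa-homogeneous, where kappa = |K| > |L| + aleph_0;
   "small" means of cardinality < kappa. *)
Definition monster {L : Language} (T : formula L -> Prop) (U : Structure L) (K : Type) : Prop :=
  complete_theory T /\ models U T /\
  (exists f : (Fsym L + Rsym L + nat)%type -> K, injective_on (fun _ => True) f) /\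
  ~ (exists g : K -> (Fsym L + Rsym L + nat)%type, injective_on (fun _ => True) g) /\
  (forall A : U -> Prop, small K A ->
     forall Sigma : ((nat -> U) -> Prop) -> Prop,
       (forall D, Sigma D -> definable A 1 D) ->
       (forall l, Forall Sigma l -> exists a, Forall (fun D => D a) l) ->
       exists a, forall D, Sigma D -> D a) /\
  (forall (A : U -> Prop) (f : U -> U), small K A -> elementary_on A f ->
     exists s, automorphism s /\ forall a, A a -> s a = f a).

(* complete type over C in n variables = ultrafilter of L_x(C) *)
Definition is_type {L : Language} {M : Structure L} (C : M -> Prop) (n : nat)
  (p : ((nat -> M) -> Prop) -> Prop) : Prop :=
  (forall D, p D -> definable C n D) /\
  p (fun _ => True) /\
  (forall D, p D -> exists a, D a) /\
  (forall D E, p D -> p E -> p (fun a => D a /\ E a)) /\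
  (forall D E, p D -> definable C n E -> (forall a, D a -> E a) -> p E) /\
  (forall D, definable C n D -> p D \/ p (fun a => ~ D a)).

Definition is_measure {L : Language} {M : Structure L} (C : M -> Prop) (n : nat)
  (mu : ((nat -> M) -> Prop) -> R) : Prop :=
  (forall D, definable C n D -> 0 <= mu D) /\
  mu (fun _ => True) = 1 /\
  (forall D E, definable C n D -> definable C n E ->
     (forall a, D a -> E a -> False) ->
     mu (fun a => D a \/ E a) = mu D + mu E) /\
  (forall D E, definable C n D -> (forall a, D a <-> E a) -> mu D = mu E).

Definition meas_eq_on {L : Language} {M : Structure L} (C : M -> Prop) (n : nat)
  (mu nu : ((nat -> M) -> Prop) -> R) : Prop :=
  forall D, definable C n D -> mu D = nu D.

(* a set in the y-variables (|x| = n) read as a set in the xy-variables *)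
Definition shift {X : Type} (n : nat) (E : (nat -> X) -> Prop) : (nat -> X) -> Prop :=
  fun v => E (fun i => v (n + i)%nat).

Definition pi_y {X : Type} (n : nat) (om : ((nat -> X) -> Prop) -> R) :
  ((nat -> X) -> Prop) -> R := fun E => om (shift n E).

Definition dirac {X : Type} (p : ((nat -> X) -> Prop) -> Prop) :
  ((nat -> X) -> Prop) -> R :=
  fun D => if excluded_middle_informative (p D) then 1 else 0.

Definition in_supp {L : Language} {M : Structure L} (m : nat) (nu : ((nat -> M) -> Prop) -> R)
  (q : ((nat -> M) -> Prop) -> Prop) : Prop :=
  is_type (fullset M) m q /\ forall D, q D -> 0 < nu D.

(* mu >=_{E,C} nu, with mu in M_x(U) (|x| = n), nu in M_y(U) (|y| = m).
   pi_x(lambda) on L_x(C) is lambda applied to the same set (phi(x) /\ y = y). *)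
Definition E_ge {L : Language} {M : Structure L} (C : M -> Prop) (n m : nat)
  (mu nu : ((nat -> M) -> Prop) -> R) : Prop :=
  exists lam : ((nat -> M) -> Prop) -> R,
    is_measure C (n + m) lam /\ meas_eq_on C n lam mu /\
    forall om, is_measure (fullset M) (n + m) om ->
      meas_eq_on C (n + m) om lam ->
      meas_eq_on (fullset M) n om mu ->
      meas_eq_on (fullset M) m (pi_y n om) nu.

(* p >=_{D,A} q : some r in S_xy(A) with p|_A subset r and p u r |- q
   (|- unfolded via compactness: each psi(y) in q is implied in U by some
   phi(x) in p together with some chi(x,y) in r). *)
Definition D_ge {L : Language} {M : Structure L} (A : M -> Prop) (n m : nat)
  (p q : ((nat -> M) -> Prop) -> Prop) : Prop :=
  exists r, is_type A (n + m) r /\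
    (forall D, definable A n D -> p D -> r D) /\
    (forall E, q E -> exists D F, p D /\ r F /\
        forall v, D v -> F v -> shift n E v).

Fixpoint sumR (k : nat) (f : nat -> R) : R :=
  match k with O => 0 | S k' => sumR k' f + f k' end.

(* Main.v *)
Require Import Defs.
From Stdlib Require Import Reals List Lia Lra Classical ClassicalEpsilon FunctionalExtensionality.
From mathcomp Require classical_sets filter.
Open Scope R_scope.

Section Syn.
Context {L : Language}.

Fixpoint trename (f : nat -> nat) (t : term L) : term L :=
  match t with
  | tvar i => tvar (f i)
  | tapp g args => tapp g (fun j => trename f (args j))
  end.

Fixpoint frename (f : nat -> nat) (phi : formula L) : formula L :=
  match phi with
  | Feq t1 t2 => Feq (trename f t1) (trename f t2)
  | Frel r args => Frel r (fun j => trename f (args j))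
  | Fnot psi => Fnot (frename f psi)
  | Fand a b => Fand (frename f a) (frename f b)
  | Fex x psi => Fex (f x) (frename f psi)
  end.

Lemma tvars_mono (t : term L) : forall (P Q : nat -> Prop),
  (forall i, P i -> Q i) -> tvars_in P t -> tvars_in Q t.
Proof. induction t; simpl; intros P Q HPQ H0; auto. intros j. eapply H; eauto. Qed.

Lemma fvs_mono (phi : formula L) : forall (P Q : nat -> Prop),
  (forall i, P i -> Q i) -> fvs_in P phi -> fvs_in Q phi.
Proof.
  induction phi; simpl; intros P Q HPQ H.
  - destruct H; split; eapply tvars_mono; eauto.
  - intros j; eapply tvars_mono; eauto.
  - eauto.
  - destruct H; split; eauto.
  - eapply IHphi; [|exact H]. intros i [Hi|Hi]; auto.
Qed.

Lemma tvars_true (t : term L) : forall (P : nat -> Prop), (forall i, P i) -> tvars_in P t.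
Proof. induction t; simpl; auto. Qed.

Lemma fvs_true (phi : formula L) : forall (P : nat -> Prop), (forall i, P i) -> fvs_in P phi.
Proof.
  induction phi; simpl; intros P HP; auto using tvars_true.
Qed.

Lemma tvars_rename f (t : term L) : forall (P Q : nat -> Prop),
  (forall i, P i -> Q (f i)) -> tvars_in P t -> tvars_in Q (trename f t).
Proof. induction t; simpl; intros P Q HPQ H0; auto. intros j; eapply H; eauto. Qed.

Lemma fvs_rename f (phi : formula L) : forall (P Q : nat -> Prop),
  (forall i, P i -> Q (f i)) -> fvs_in P phi -> fvs_in Q (frename f phi).
Proof.
  induction phi; simpl; intros P Q HPQ H.
  - destruct H; split; eapply tvars_rename; eauto.
  - intros j; eapply tvars_rename; eauto.
  - eauto.
  - destruct H; split; eauto.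
  - eapply IHphi; [|exact H]. intros i [Hi|Hi]; [left; subst; auto|right; auto].
Qed.

Variable M : Structure L.

Lemma teval_ext (t : term L) : forall (P : nat -> Prop) (v w : nat -> M),
  tvars_in P t -> (forall i, P i -> v i = w i) -> teval M v t = teval M w t.
Proof.
  induction t; simpl; intros P v w Ht Hvw; auto.
  f_equal. apply functional_extensionality. intros j. eapply H; eauto.
Qed.

Lemma sat_ext (phi : formula L) : forall (P : nat -> Prop) (v w : nat -> M),
  fvs_in P phi -> (forall i, P i -> v i = w i) -> (sat M v phi <-> sat M w phi).
Proof.
  induction phi; simpl; intros P v w Hf Hvw.
  - destruct Hf. rewrite (teval_ext t P v w), (teval_ext t0 P v w); auto. tauto.
  - replace (fun j => teval M v (t j)) with (fun j => teval M w (t j)); [tauto|].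
    apply functional_extensionality; intros j; symmetry; eapply teval_ext; eauto.
  - rewrite (IHphi P v w); auto. tauto.
  - destruct Hf. rewrite (IHphi1 P v w), (IHphi2 P v w); auto. tauto.
  - split; intros [a Ha]; exists a.
    + eapply (IHphi _ (upd v n a) (upd w n a) Hf); auto.
      intros i Hi; unfold upd. destruct (Nat.eqb_spec i n); auto. destruct Hi; [contradiction|auto].
    + eapply (IHphi _ (upd v n a) (upd w n a) Hf); auto.
      intros i Hi; unfold upd. destruct (Nat.eqb_spec i n); auto. destruct Hi; [contradiction|auto].
Qed.

Lemma sat_ext_all (phi : formula L) (v w : nat -> M) :
  (forall i, v i = w i) -> (sat M v phi <-> sat M w phi).
Proof. intros H. apply (sat_ext phi (fun _ => True)); auto. apply fvs_true; auto. Qed.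

Lemma teval_rename f (t : term L) (v : nat -> M) :
  teval M v (trename f t) = teval M (fun i => v (f i)) t.
Proof.
  induction t; simpl; auto. f_equal. apply functional_extensionality; auto.
Qed.

Lemma sat_rename f (finj : forall i j, f i = f j -> i = j) (phi : formula L) :
  forall (v : nat -> M), sat M v (frename f phi) <-> sat M (fun i => v (f i)) phi.
Proof.
  induction phi; simpl; intros v.
  - rewrite !teval_rename. tauto.
  - replace (fun j => teval M v (trename f (t j))) with (fun j => teval M (fun i => v (f i)) (t j)); [tauto|].
    apply functional_extensionality; intros j; rewrite teval_rename; auto.
  - rewrite IHphi. tauto.
  - rewrite IHphi1, IHphi2. tauto.
  - split; intros [a Ha]; exists a.
    + rewrite IHphi in Ha. eapply sat_ext_all; [|exact Ha].
      intros i; unfold upd. destruct (Nat.eqb_spec (f i) (f n)), (Nat.eqb_spec i n); subst; auto;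
      try (apply finj in e; contradiction); congruence.
    + apply (proj2 (IHphi _)). eapply sat_ext_all; [|exact Ha].
      intros i; unfold upd. destruct (Nat.eqb_spec (f i) (f n)), (Nat.eqb_spec i n); subst; auto;
      try (apply finj in e; contradiction); congruence.
Qed.

End Syn.

Section Def.
Context {L : Language} (U : Structure L).

Lemma env_lt n a ps i : (i < n)%nat -> env U n a ps i = a i.
Proof. intros H; unfold env; destruct (Nat.ltb_spec i n); auto; lia. Qed.
Lemma env_ge n a ps i : (n <= i)%nat -> env U n a ps i = nth (i - n) ps (a i).
Proof. intros H; unfold env; destruct (Nat.ltb_spec i n); auto; lia. Qed.

Lemma def_mono (C C' : U -> Prop) k D :
  (forall u, C u -> C' u) -> definable C k D -> definable C' k D.
Proof.
  intros H [phi [ps [HF [Hv Hs]]]]. exists phi, ps. split; [|split]; auto.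
  eapply Forall_impl; eauto.
Qed.

Lemma def_full (C : U -> Prop) k D : definable C k D -> definable (fullset U) k D.
Proof. apply def_mono. intros; exact I. Qed.

Lemma def_ext (C : U -> Prop) k D E :
  definable C k D -> (forall a, D a <-> E a) -> definable C k E.
Proof.
  intros [phi [ps [HF [Hv Hs]]]] H. exists phi, ps. split; [|split]; auto.
  intros a. rewrite <- H. auto.
Qed.

Lemma def_not (C : U -> Prop) k D : definable C k D -> definable C k (fun a => ~ D a).
Proof.
  intros [phi [ps [HF [Hv Hs]]]]. exists (Fnot phi), ps. split; [|split]; auto.
  intros a. simpl. rewrite Hs. tauto.
Qed.

Lemma def_true (C : U -> Prop) k : definable C k (fun _ => True).
Proof.
  destruct (dom_inh _ U) as [u].
  exists (Fex 0 (Feq (tvar 0) (tvar 0))), nil. split; [|split]; auto.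
  - simpl. auto.
  - intros a. simpl. split; auto. intros _. exists u. auto.
Qed.

Lemma def_false (C : U -> Prop) k : definable C k (fun _ => False).
Proof. eapply def_ext; [apply def_not, def_true|]. intros a; tauto. Qed.

Lemma def_and (C : U -> Prop) k D E :
  definable C k D -> definable C k E -> definable C k (fun a => D a /\ E a).
Proof.
  intros [phi1 [ps1 [HF1 [Hv1 Hs1]]]] [phi2 [ps2 [HF2 [Hv2 Hs2]]]].
  set (f := fun i => if Nat.ltb i k then i else (i + length ps1)%nat).
  assert (finj : forall i j, f i = f j -> i = j).
  { intros i j; unfold f; destruct (Nat.ltb_spec i k), (Nat.ltb_spec j k); lia. }
  exists (Fand phi1 (frename f phi2)), (ps1 ++ ps2). split; [|split].
  - apply Forall_app; auto.
  - simpl. rewrite length_app. split.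
    + eapply fvs_mono; [|exact Hv1]. intros i Hi; simpl in *; lia.
    + eapply fvs_rename; [|exact Hv2]. intros i Hi; simpl in *; unfold f.
      destruct (Nat.ltb_spec i k); lia.
  - intros a. rewrite Hs1, Hs2. simpl. rewrite sat_rename; auto.
    split; intros [H1 H2]; split.
    + eapply (sat_ext U phi1 _ _ _ Hv1); [|exact H1]. intros i Hi.
      destruct (Nat.lt_ge_cases i k). { rewrite !env_lt; auto. }
      rewrite !env_ge; auto. rewrite app_nth1; auto. lia.
    + eapply (sat_ext U phi2 _ _ _ Hv2); [|exact H2]. intros i Hi. unfold f.
      destruct (Nat.ltb_spec i k). { rewrite !env_lt; auto. }
      rewrite !env_ge; try lia. rewrite app_nth2; try lia.
      replace (i + length ps1 - k - length ps1)%nat with (i - k)%nat by lia.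
      apply nth_indep. lia.
    + eapply (sat_ext U phi1 _ _ _ Hv1); [|exact H1]. intros i Hi.
      destruct (Nat.lt_ge_cases i k). { rewrite !env_lt; auto. }
      rewrite !env_ge; auto. rewrite app_nth1; auto. lia.
    + eapply (sat_ext U phi2 _ _ _ Hv2); [|exact H2]. intros i Hi. unfold f.
      destruct (Nat.ltb_spec i k). { rewrite !env_lt; auto. }
      rewrite !env_ge; try lia. rewrite app_nth2; try lia.
      replace (i + length ps1 - k - length ps1)%nat with (i - k)%nat by lia.
      apply nth_indep. lia.
Qed.

Lemma def_or (C : U -> Prop) k D E :
  definable C k D -> definable C k E -> definable C k (fun a => D a \/ E a).
Proof.
  intros HD HE. eapply def_ext; [exact (def_not _ _ _ (def_and _ _ _ _ (def_not _ _ _ HD) (def_not _ _ _ HE)))|].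
  intros a; cbv beta. split; [intros H; apply NNPP; tauto|tauto].
Qed.

Lemma def_lift (C : U -> Prop) n m D : definable C n D -> definable C (n + m) D.
Proof.
  intros [phi [ps [HF [Hv Hs]]]].
  set (f := fun i => if Nat.ltb i n then i else (i + m)%nat).
  assert (finj : forall i j, f i = f j -> i = j).
  { intros i j; unfold f; destruct (Nat.ltb_spec i n), (Nat.ltb_spec j n); lia. }
  exists (frename f phi), ps. split; [|split]; auto.
  - eapply fvs_rename; [|exact Hv]. intros i Hi; simpl in *; unfold f; destruct (Nat.ltb_spec i n); lia.
  - intros a. rewrite Hs, sat_rename; auto.
    apply (sat_ext U phi _ _ _ Hv). intros i Hi. unfold f.
    destruct (Nat.ltb_spec i n). { rewrite !env_lt; auto. lia. }
    rewrite !env_ge; try lia.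
    replace (i + m - (n + m))%nat with (i - n)%nat by lia. apply nth_indep. lia.
Qed.

Lemma def_shift (C : U -> Prop) n m E : definable C m E -> definable C (n + m) (shift n E).
Proof.
  intros [phi [ps [HF [Hv Hs]]]].
  set (f := fun i => (n + i)%nat).
  assert (finj : forall i j, f i = f j -> i = j). { intros i j; unfold f; lia. }
  exists (frename f phi), ps. split; [|split]; auto.
  - eapply fvs_rename; [|exact Hv]. intros i Hi; simpl in *; unfold f; lia.
  - intros a. unfold shift. rewrite Hs, sat_rename; auto.
    apply sat_ext_all. intros i. unfold f.
    destruct (Nat.lt_ge_cases i m). { rewrite !env_lt; auto. lia. }
    rewrite !env_ge; try lia.
    replace (n + i - (n + m))%nat with (i - m)%nat by lia. auto.
Qed.

Lemma def_equiv (C C' : U -> Prop) k D :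
  (forall u, C u <-> C' u) -> definable C k D -> definable C' k D.
Proof. intros H. apply def_mono. intros u; apply H. Qed.

End Def.

Section Meas.
Context {L : Language} (U : Structure L).

Lemma dirac_1 (p : ((nat -> U) -> Prop) -> Prop) D : p D -> dirac p D = 1.
Proof. intros H; unfold dirac; destruct (excluded_middle_informative (p D)); tauto. Qed.
Lemma dirac_0 (p : ((nat -> U) -> Prop) -> Prop) D : ~ p D -> dirac p D = 0.
Proof. intros H; unfold dirac; destruct (excluded_middle_informative (p D)); tauto. Qed.

Section M.
Variables (C : U -> Prop) (k : nat) (mu : ((nat -> U) -> Prop) -> R).
Hypothesis Hmu : is_measure C k mu.

Lemma m_nn D : definable C k D -> 0 <= mu D.
Proof. destruct Hmu as [H _]; auto. Qed.
Lemma m_T : mu (fun _ => True) = 1.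
Proof. destruct Hmu as [_ [H _]]; auto. Qed.
Lemma m_add D E : definable C k D -> definable C k E ->
  (forall a, D a -> E a -> False) -> mu (fun a => D a \/ E a) = mu D + mu E.
Proof. destruct Hmu as [_ [_ [H _]]]; auto. Qed.
Lemma m_inv D E : definable C k D -> (forall a, D a <-> E a) -> mu D = mu E.
Proof. destruct Hmu as [_ [_ [_ H]]]; auto. Qed.

Lemma m_split D Y : definable C k D -> definable C k Y ->
  mu D = mu (fun a => D a /\ Y a) + mu (fun a => D a /\ ~ Y a).
Proof.
  intros HD HY.
  rewrite <- m_add; [| apply def_and; auto | apply def_and; auto; apply def_not; auto | intros a; tauto].
  apply m_inv; auto. intros a. tauto.
Qed.

Lemma m_compl D : definable C k D -> mu (fun a => ~ D a) = 1 - mu D.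
Proof.
  intros HD. rewrite <- m_T.
  rewrite (m_split (fun _ => True) D); [|apply def_true|auto].
  rewrite (m_inv (fun a => True /\ D a) D), (m_inv (fun a => True /\ ~ D a) (fun a => ~ D a)).
  - ring.
  - apply def_and; [apply def_true|apply def_not; auto].
  - intros; tauto.
  - apply def_and; [apply def_true|auto].
  - intros; tauto.
Qed.

Lemma m_mono D E : definable C k D -> definable C k E -> (forall a, D a -> E a) -> mu D <= mu E.
Proof.
  intros HD HE H. rewrite (m_split E D); auto.
  rewrite (m_inv (fun a => E a /\ D a) D).
  - assert (0 <= mu (fun a => E a /\ ~ D a)) by (apply m_nn, def_and; auto; apply def_not; auto). lra.
  - apply def_and; auto.
  - intros a; split; [tauto|]. intros; split; auto.
Qed.

Lemma m_le1 D : definable C k D -> mu D <= 1.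
Proof. intros HD. rewrite <- m_T. apply m_mono; auto. apply def_true. Qed.

Lemma m_full D Y : definable C k D -> definable C k Y -> mu Y = 1 ->
  mu (fun a => D a /\ Y a) = mu D.
Proof.
  intros HD HY H1. rewrite (m_split D Y); auto.
  assert (mu (fun a => D a /\ ~ Y a) <= mu (fun a => ~ Y a)).
  { apply m_mono; [apply def_and; auto; apply def_not; auto|apply def_not; auto|tauto]. }
  assert (0 <= mu (fun a => D a /\ ~ Y a)) by (apply m_nn, def_and; auto; apply def_not; auto).
  rewrite m_compl in H; auto. lra.
Qed.

Lemma m_null D Y : definable C k D -> definable C k Y -> mu Y = 0 ->
  mu (fun a => D a /\ Y a) = 0.
Proof.
  intros HD HY H0.
  assert (mu (fun a => D a /\ Y a) <= mu Y) by (apply m_mono; [apply def_and|..]; auto; tauto).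
  assert (0 <= mu (fun a => D a /\ Y a)) by (apply m_nn, def_and; auto). lra.
Qed.

End M.

Lemma meas_full_C (C : U -> Prop) k mu : is_measure (fullset U) k mu -> is_measure C k mu.
Proof.
  intros [H1 [H2 [H3 H4]]]. split; [|split; [|split]]; auto.
  - intros D HD; apply H1, (def_full U C); auto.
  - intros D E HD HE; apply H3; eapply def_full; eauto.
  - intros D E HD; apply H4; eapply def_full; eauto.
Qed.

Lemma meas_comb (C : U -> Prop) k mu1 mu2 r s :
  is_measure C k mu1 -> is_measure C k mu2 -> 0 <= r -> 0 <= s -> r + s = 1 ->
  is_measure C k (fun X => r * mu1 X + s * mu2 X).
Proof.
  intros [A1 [A2 [A3 A4]]] [B1 [B2 [B3 B4]]] Hr Hs Hrs. split; [|split; [|split]].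
  - intros D HD. specialize (A1 D HD). specialize (B1 D HD). nra.
  - rewrite A2, B2. lra.
  - intros D E HD HE Hd. rewrite A3, B3; auto. ring.
  - intros D E HD HDE. rewrite (A4 D E), (B4 D E); auto.
Qed.

Lemma meas_restr k om Y c : is_measure (fullset U) k om -> definable (fullset U) k Y ->
  om Y = c -> 0 < c -> is_measure (fullset U) k (fun X => om (fun a => X a /\ Y a) / c).
Proof.
  intros Hom HY Hc Hc0. split; [|split; [|split]].
  - intros D HD. apply Rmult_le_pos; [apply (m_nn _ _ _ Hom), def_and; auto|].
    left; apply Rinv_0_lt_compat; auto.
  - rewrite (m_inv _ _ _ Hom _ Y); [rewrite Hc; field; lra|apply def_and; auto; apply def_true|tauto].
  - intros D E HD HE Hd.
    rewrite (m_inv _ _ _ Hom _ (fun a => (D a /\ Y a) \/ (E a /\ Y a))).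
    + rewrite (m_add _ _ _ Hom); [field; lra|apply def_and; auto|apply def_and; auto|].
      intros a [? ?] [? ?]; eauto.
    + apply def_and; auto. apply def_or; auto.
    + intros a; tauto.
  - intros D E HD HDE. f_equal. apply (m_inv _ _ _ Hom). apply def_and; auto.
    intros a; rewrite HDE; tauto.
Qed.

Lemma E_ge_equiv (C C' : U -> Prop) n m mu nu :
  (forall u, C u <-> C' u) -> E_ge C n m mu nu -> E_ge C' n m mu nu.
Proof.
  intros HC [lam [[A1 [A2 [A3 A4]]] [Hp HP]]]. exists lam. split; [|split].
  - split; [|split; [|split]]; auto.
    + intros D HD; apply A1; eapply def_equiv; [|eauto]; intros; rewrite HC; tauto.
    + intros D E HD HE; apply A3; eapply def_equiv; [| eauto| |eauto]; intros; rewrite HC; tauto.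
    + intros D E HD; apply A4; eapply def_equiv; [|eauto]; intros; rewrite HC; tauto.
  - intros D HD; apply Hp; eapply def_equiv; [|eauto]; intros; rewrite HC; tauto.
  - intros om Hom Hext Hm. apply HP; auto.
    intros D HD; apply Hext; eapply def_equiv; [|eauto]; intros; rewrite HC; tauto.
Qed.

Lemma E_ge_target (C : U -> Prop) n m mu nu nu' :
  (forall D, definable (fullset U) m D -> nu D = nu' D) -> E_ge C n m mu nu -> E_ge C n m mu nu'.
Proof.
  intros H [lam [Hl [Hp HP]]]. exists lam. split; [|split]; auto.
  intros om Hom Hext Hm D HD. rewrite <- H; auto. apply HP; auto.
Qed.

End Meas.

Section BLsec.
Context {L : Language} (U : Structure L).

Lemma BL (C : U -> Prop) n m (p : ((nat -> U) -> Prop) -> Prop) nu1 nu2 r s :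
  0 <= r -> 0 <= s -> r + s = 1 ->
  (exists th, definable (fullset U) m th /\ nu1 th = 1 /\ nu2 th = 0) ->
  E_ge C n m (dirac p) nu1 -> E_ge C n m (dirac p) nu2 ->
  exists b : list U, E_ge (fun u => C u \/ In u b) n m (dirac p)
                          (fun D => r * nu1 D + s * nu2 D).
Proof.
  intros Hr Hs Hrs [th [Hth [Hth1 Hth2]]] [lam1 [Hl1 [Hl1p HP1]]] [lam2 [Hl2 [Hl2p HP2]]].
  set (Ext := fun lam om => is_measure (fullset U) (n+m) om /\ meas_eq_on C (n+m) om lam /\
                            meas_eq_on (fullset U) n om (dirac p)).
  destruct (classic (exists om, Ext lam1 om)) as [[om1 [Ho1 [Ho1e Ho1p]]]|N1].
  2:{ exists nil. apply (E_ge_equiv U C). { intros u; simpl; tauto. }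
      exists lam1. split; [|split]; auto. intros om Hom He Hm. exfalso. apply N1.
      exists om. split; auto. }
  destruct (classic (exists om, Ext lam2 om)) as [[om2 [Ho2 [Ho2e Ho2p]]]|N2].
  2:{ exists nil. apply (E_ge_equiv U C). { intros u; simpl; tauto. }
      exists lam2. split; [|split]; auto. intros om Hom He Hm. exfalso. apply N2.
      exists om. split; auto. }
  pose proof Hth as Hth'. destruct Hth' as [phi [b [_ [Hv Hsat]]]].
  set (C' := fun u => C u \/ In u b).
  assert (HthC : definable C' m th).
  { exists phi, b. split; [apply Forall_forall; intros; right; auto| split; auto]. }
  set (Th := shift n th).
  assert (HTh : definable C' (n+m) Th) by (apply def_shift; auto).
  assert (HThf : definable (fullset U) (n+m) Th) by (eapply def_full; eauto).
  assert (HCC' : forall X, definable C (n+m) X -> definable C' (n+m) X).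
  { intros X; apply def_mono; intros u Hu; left; auto. }
  assert (Hom1Th : om1 Th = 1).
  { pose proof (HP1 om1 Ho1 Ho1e Ho1p th Hth) as H. unfold pi_y in H. rewrite <- Hth1. exact H. }
  assert (Hom2Th : om2 Th = 0).
  { pose proof (HP2 om2 Ho2 Ho2e Ho2p th Hth) as H. unfold pi_y in H. rewrite <- Hth2. exact H. }
  exists b. exists (fun X => r * om1 X + s * om2 X). split; [|split].
  - apply meas_comb; auto; apply meas_full_C; auto.
  - intros D HD. cbv beta. rewrite Ho1p, Ho2p; try (eapply def_full; eauto).
    rewrite <- Rmult_plus_distr_r, Hrs. ring.
  - intros om Hom Hext Hm E HE. unfold pi_y. cbv beta.
    destruct (Req_dec r 0) as [r0|rpos].
    { assert (s1 : s = 1) by lra.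
      assert (Hl : meas_eq_on C (n + m) om lam2).
      { intros X HX. rewrite Hext by (apply HCC'; auto). rewrite <- (Ho2e X HX), r0, s1. ring. }
      pose proof (HP2 om Hom Hl Hm E HE) as H. unfold pi_y in H. rewrite H, r0, s1. ring. }
    destruct (Req_dec s 0) as [s0|spos].
    { assert (r1 : r = 1) by lra.
      assert (Hl : meas_eq_on C (n + m) om lam1).
      { intros X HX. rewrite Hext by (apply HCC'; auto). rewrite <- (Ho1e X HX), s0, r1. ring. }
      pose proof (HP1 om Hom Hl Hm E HE) as H. unfold pi_y in H. rewrite H, s0, r1. ring. }
    assert (rp : 0 < r) by lra. assert (sp : 0 < s) by lra.
    assert (HnThf : definable (fullset U) (n+m) (fun a => ~ Th a)) by (apply def_not; auto).
    assert (HomTh : om Th = r).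
    { rewrite Hext by auto. rewrite Hom1Th, Hom2Th. ring. }
    assert (HomnTh : om (fun a => ~ Th a) = s).
    { rewrite (m_compl _ _ _ _ Hom); auto. lra. }
    set (om1' := fun X => om (fun a => X a /\ Th a) / r).
    set (om2' := fun X => om (fun a => X a /\ ~ Th a) / s).
    assert (M1 : is_measure (fullset U) (n+m) om1') by (apply meas_restr; auto).
    assert (M2 : is_measure (fullset U) (n+m) om2') by (apply meas_restr; auto).
    assert (E1 : meas_eq_on C (n+m) om1' lam1).
    { intros X HX. unfold om1'. assert (HXf : definable (fullset U) (n+m) X) by (eapply def_full; eauto).
      rewrite Hext by (apply def_and; auto).
      rewrite (m_full _ _ _ _ Ho1 X Th), (m_null _ _ _ _ Ho2 X Th); auto.
      rewrite Ho1e; auto. field. lra. }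
    assert (E2 : meas_eq_on C (n+m) om2' lam2).
    { intros X HX. unfold om2'. assert (HXf : definable (fullset U) (n+m) X) by (eapply def_full; eauto).
      rewrite Hext by (apply def_and; auto; apply def_not; auto).
      rewrite (m_null _ _ _ _ Ho1 X (fun a => ~ Th a)), (m_full _ _ _ _ Ho2 X (fun a => ~ Th a)); auto.
      - rewrite Ho2e; auto. field. lra.
      - rewrite (m_compl _ _ _ _ Ho2); auto. lra.
      - rewrite (m_compl _ _ _ _ Ho1); auto. lra. }
    assert (P1 : meas_eq_on (fullset U) n om1' (dirac p)).
    { intros D HD. unfold om1'. pose proof (def_lift U _ n m D HD) as HDl.
      rewrite (m_inv _ _ _ _ Hom (fun a => D a /\ Th a) (fun a => Th a /\ D a));
        [| apply def_and; auto | intros; tauto].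
      destruct (classic (p D)) as [pD|npD].
      - rewrite dirac_1 by auto. rewrite (m_full _ _ _ _ Hom Th D); auto.
        + rewrite HomTh. field. lra.
        + rewrite Hm; auto. apply dirac_1; auto.
      - rewrite dirac_0 by auto. rewrite (m_null _ _ _ _ Hom Th D); auto.
        + unfold Rdiv; ring.
        + rewrite Hm; auto. apply dirac_0; auto. }
    assert (P2 : meas_eq_on (fullset U) n om2' (dirac p)).
    { intros D HD. unfold om2'. pose proof (def_lift U _ n m D HD) as HDl.
      rewrite (m_inv _ _ _ _ Hom (fun a => D a /\ ~ Th a) (fun a => ~ Th a /\ D a));
        [| apply def_and; auto | intros; tauto].
      destruct (classic (p D)) as [pD|npD].
      - rewrite dirac_1 by auto. rewrite (m_full _ _ _ _ Hom (fun a => ~ Th a) D); auto.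
        + rewrite HomnTh. field. lra.
        + rewrite Hm; auto. apply dirac_1; auto.
      - rewrite dirac_0 by auto. rewrite (m_null _ _ _ _ Hom (fun a => ~ Th a) D); auto.
        + unfold Rdiv; ring.
        + rewrite Hm; auto. apply dirac_0; auto. }
    pose proof (HP1 om1' M1 E1 P1 E HE) as R1. pose proof (HP2 om2' M2 E2 P2 E HE) as R2.
    unfold pi_y, om1', om2' in R1, R2.
    assert (HEs : definable (fullset U) (n+m) (shift n E)) by (apply def_shift; auto).
    rewrite (m_split _ _ _ _ Hom (shift n E) Th); auto.
    assert (Q1 : om (fun a => shift n E a /\ Th a) = r * nu1 E) by (rewrite <- R1; field; lra).
    assert (Q2 : om (fun a => shift n E a /\ ~ Th a) = s * nu2 E) by (rewrite <- R2; field; lra).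
    rewrite Q1, Q2. ring.
Qed.

End BLsec.

Lemma UF (X : Type) (x0 : X) (F : (X -> Prop) -> Prop) :
  (forall D E, F D -> F E -> F (fun x => D x /\ E x)) ->
  (forall D, F D -> exists x, D x) ->
  exists G : (X -> Prop) -> Prop,
    (forall D, F D -> G D) /\ G (fun _ => True) /\
    (forall P, G P -> exists x, P x) /\
    (forall P Q, G P -> G Q -> G (fun x => P x /\ Q x)) /\
    (forall P Q, G P -> (forall x, P x -> Q x) -> G Q) /\
    (forall P, G P \/ G (fun x => ~ P x)).
Proof.
  intros HI HN.
  set (G0 := fun P : X -> Prop => (forall x, P x) \/ exists D, F D /\ forall x, D x -> P x).
  assert (PF : filter.ProperFilter G0).
  { constructor.
    - intros [H|[D [HD HDP]]].
      + exact (H x0).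
      + destruct (HN D HD) as [x Hx]. exact (HDP x Hx).
    - constructor.
      + left. intros x. exact I.
      + intros P Q [HP|[D [HD HDP]]] [HQ|[E [HE HEQ]]].
        * left. intros x. split; auto.
        * right. exists E. split; auto. intros x Hx. split; auto.
        * right. exists D. split; auto. intros x Hx. split; auto.
        * right. exists (fun x => D x /\ E x). split; auto. intros x [Hx1 Hx2]. split; auto.
      + intros P Q HPQ [HP|[D [HD HDP]]].
        * left. intros x. apply HPQ. apply HP.
        * right. exists D. split; auto. }
  destruct (filter.ultraFilterLemma PF) as [G [GU sub]].
  assert (GP : filter.ProperFilter G) by (apply filter.ultra_proper).
  assert (GF : filter.Filter G) by (apply filter.filter_filter).
  exists G. split; [|split; [|split; [|split; [|split]]]].
  - intros D HD. apply sub. right. exists D. split; auto.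
  - apply (@filter.filterT _ _ GF).
  - intros P HP. apply NNPP. intro Hn. apply (@filter.filter_not_empty _ G GP).
    apply (@filter.filterS _ _ GF P); auto. intros x Hx. apply Hn. exists x; auto.
  - intros P Q HP HQ. apply (@filter.filterI _ _ GF); auto.
  - intros P Q HP HPQ. apply (@filter.filterS _ _ GF P); auto.
  - intros P. apply (filter.in_ultra_setVsetC P GU).
Qed.

Section Part.
Context {L : Language} (U : Structure L).

Lemma sep m nu1 nu2 : is_measure (fullset U) m nu1 -> is_measure (fullset U) m nu2 ->
  ~ (exists q, in_supp m nu1 q /\ in_supp m nu2 q) ->
  exists th, definable (fullset U) m th /\ nu1 th = 1 /\ nu2 th = 0.
Proof.
  intros Hn1 Hn2 Hsupp. apply NNPP; intro Hno. apply Hsupp.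
  destruct (dom_inh _ U) as [u].
  set (F := fun X : (nat -> U) -> Prop => exists t1 t2, definable (fullset U) m t1 /\
             definable (fullset U) m t2 /\ nu1 t1 = 1 /\ nu2 t2 = 1 /\
             forall a, X a <-> t1 a /\ t2 a).
  destruct (UF (nat -> U) (fun _ => u) F) as [G [GF [GT [Gne [GI [GS GC]]]]]].
  - intros X Y [t1 [t2 [D1 [D2 [N1 [N2 HX]]]]]] [t1' [t2' [D1' [D2' [N1' [N2' HY]]]]]].
    exists (fun a => t1 a /\ t1' a), (fun a => t2 a /\ t2' a).
    split; [apply def_and; auto|]. split; [apply def_and; auto|].
    split; [rewrite (m_full _ _ _ _ Hn1); auto|]. split; [rewrite (m_full _ _ _ _ Hn2); auto|].
    intros a. rewrite HX, HY. tauto.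
  - intros X [t1 [t2 [D1 [D2 [N1 [N2 HX]]]]]]. apply NNPP; intro Hne. apply Hno.
    exists t1. split; auto. split; auto.
    assert (nu2 t1 <= nu2 (fun a => ~ t2 a)).
    { apply (m_mono _ _ _ _ Hn2); auto. apply def_not; auto.
      intros a H1 H2. apply Hne. exists a. apply HX. auto. }
    rewrite (m_compl _ _ _ _ Hn2) in H; auto.
    assert (0 <= nu2 t1) by (apply (m_nn _ _ _ _ Hn2); auto). lra.
  - exists (fun D => G D /\ definable (fullset U) m D).
    assert (Ht : is_type (fullset U) m (fun D => G D /\ definable (fullset U) m D)).
    { split; [|split; [|split; [|split; [|split]]]].
      - intros D [_ H]; auto.
      - split; auto. apply def_true.
      - intros D [H _]; auto.
      - intros D E [H1 H2] [H3 H4]; split; auto. apply def_and; auto.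
      - intros D E [H1 H2] HE HDE; split; auto. eapply GS; eauto.
      - intros D HD. destruct (GC D); [left|right]; split; auto. apply def_not; auto. }
    split; split; auto.
    + intros D [GD HD]. destruct (Rlt_or_le 0 (nu1 D)) as [|Hle]; auto. exfalso.
      assert (nu1 D = 0) by (pose proof (m_nn _ _ _ _ Hn1 D HD); lra).
      assert (G (fun a => ~ D a)).
      { apply GF. exists (fun a => ~ D a), (fun _ => True). split; [apply def_not; auto|].
        split; [apply def_true|]. split; [rewrite (m_compl _ _ _ _ Hn1); auto; lra|].
        split; [apply (m_T _ _ _ _ Hn2)|]. intros a; tauto. }
      destruct (Gne _ (GI _ _ GD H0)) as [a [Ha1 Ha2]]; auto.
    + intros D [GD HD]. destruct (Rlt_or_le 0 (nu2 D)) as [|Hle]; auto. exfalso.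
      assert (nu2 D = 0) by (pose proof (m_nn _ _ _ _ Hn2 D HD); lra).
      assert (G (fun a => ~ D a)).
      { apply GF. exists (fun _ => True), (fun a => ~ D a). split; [apply def_true|].
        split; [apply def_not; auto|]. split; [apply (m_T _ _ _ _ Hn1)|].
        split; [rewrite (m_compl _ _ _ _ Hn2); auto; lra|]. intros a; tauto. }
      destruct (Gne _ (GI _ _ GD H0)) as [a [Ha1 Ha2]]; auto.
Qed.

Lemma dirac_bounds (q : ((nat -> U) -> Prop) -> Prop) D : 0 <= dirac q D <= 1.
Proof. unfold dirac; destruct (excluded_middle_informative (q D)); lra. Qed.

Lemma dirac_type_meas (C : U -> Prop) k r : is_type C k r -> is_measure C k (dirac r).
Proof.
  intros [T1 [T2 [T3 [T4 [T5 T6]]]]]. split; [|split; [|split]].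
  - intros D _. apply dirac_bounds.
  - apply dirac_1; auto.
  - intros D E HD HE Hd.
    destruct (classic (r D)) as [rD|nrD], (classic (r E)) as [rE|nrE].
    + destruct (T3 _ (T4 _ _ rD rE)) as [a [Ha1 Ha2]]. exfalso; eauto.
    + rewrite (dirac_1 U r (fun a => D a \/ E a)), (dirac_1 U r D), (dirac_0 U r E); auto. ring.
      apply (T5 D); auto. apply def_or; auto.
    + rewrite (dirac_1 U r (fun a => D a \/ E a)), (dirac_0 U r D), (dirac_1 U r E); auto. ring.
      apply (T5 E); auto. apply def_or; auto.
    + rewrite (dirac_0 U r (fun a => D a \/ E a)), (dirac_0 U r D), (dirac_0 U r E); auto. ring. intros rDE.
      destruct (T6 D HD) as [|rnD]; [contradiction|].
      destruct (T6 E HE) as [|rnE]; [contradiction|].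
      destruct (T3 _ (T4 _ _ rDE (T4 _ _ rnD rnE))) as [a [[Ha|Ha] [Hb Hc]]]; auto.
  - intros D E HD HDE. assert (HE : definable C k E) by (eapply def_ext; eauto).
    destruct (classic (r D)) as [rD|nrD].
    + rewrite (dirac_1 U r D), (dirac_1 U r E); auto. apply (T5 D); auto. intros; apply HDE; auto.
    + rewrite (dirac_0 U r D), (dirac_0 U r E); auto. intros rE. apply nrD. apply (T5 E); auto. intros; apply HDE; auto.
Qed.

Lemma DE' (A : U -> Prop) n m p q r om :
  is_type (fullset U) n p -> is_type (fullset U) m q -> is_type A (n+m) r ->
  (forall E, q E -> exists D F, p D /\ r F /\ forall v, D v -> F v -> shift n E v) ->
  is_measure (fullset U) (n+m) om -> meas_eq_on A (n+m) om (dirac r) ->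
  meas_eq_on (fullset U) n om (dirac p) ->
  forall C : U -> Prop, (forall u, A u -> C u) -> E_ge C n m (dirac p) (dirac q).
Proof.
  intros Hp Hq Hr Hqr Hom Hext Hm C HC. exists om. split; [|split].
  - apply meas_full_C; auto.
  - intros D HD; apply Hm; eapply def_full; eauto.
  - intros om' Hom' Hext' Hm'.
    assert (key : forall E, q E -> om' (shift n E) = 1).
    { intros E qE. destruct (Hqr E qE) as [D [F [pD [rF Hinc]]]].
      assert (HD : definable (fullset U) n D) by (apply Hp; auto).
      assert (HF : definable A (n+m) F) by (apply Hr; auto).
      assert (HE : definable (fullset U) m E) by (apply Hq; auto).
      assert (HDl := def_lift U _ n m D HD).
      assert (HFf : definable (fullset U) (n+m) F) by (eapply def_full; eauto).
      assert (HEs : definable (fullset U) (n+m) (shift n E)) by (apply def_shift; auto).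
      assert (o1 : om' D = 1) by (rewrite Hm'; auto; apply dirac_1; auto).
      assert (o2 : om' F = 1).
      { rewrite Hext'; [|eapply def_mono; eauto]. rewrite Hext; auto. apply dirac_1; auto. }
      assert (om' (fun a => F a /\ D a) <= om' (shift n E)).
      { apply (m_mono _ _ _ _ Hom'); auto. apply def_and; auto. intros a [? ?]; auto. }
      rewrite (m_full _ _ _ _ Hom') in H; auto.
      pose proof (m_le1 _ _ _ _ Hom' _ HEs). lra. }
    intros E HE. unfold pi_y.
    destruct (classic (q E)) as [qE|nqE].
    + rewrite dirac_1; auto.
    + rewrite dirac_0; auto.
      destruct Hq as [_ [_ [T3 [T4 [_ T6]]]]].
      destruct (T6 E HE) as [|qnE]; [contradiction|].
      pose proof (key _ qnE) as K.
      assert (HEs : definable (fullset U) (n+m) (shift n E)) by (apply def_shift; auto).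
      rewrite (m_inv _ _ _ _ Hom' (shift n (fun a => ~ E a)) (fun a => ~ shift n E a)) in K.
      * rewrite (m_compl _ _ _ _ Hom') in K; auto. lra.
      * apply def_shift, def_not; auto.
      * intros a; unfold shift; tauto.
Qed.

End Part.

Lemma sumR_ext k f g : (forall i, (i < k)%nat -> f i = g i) -> sumR k f = sumR k g.
Proof. induction k; simpl; intros H; auto. rewrite IHk, H; auto. Qed.
Lemma sumR_scale k c f : sumR k (fun i => c * f i) = c * sumR k f.
Proof. induction k; simpl; [ring|]. rewrite IHk; ring. Qed.
Lemma sumR_le k f g : (forall i, (i < k)%nat -> f i <= g i) -> sumR k f <= sumR k g.
Proof. induction k; simpl; intros H; [lra|]. pose proof (H k ltac:(lia)). pose proof (IHk ltac:(auto)). lra. Qed.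
Lemma sumR_nn k f : (forall i, (i < k)%nat -> 0 <= f i) -> 0 <= sumR k f.
Proof. induction k; simpl; intros H; [lra|]. pose proof (H k ltac:(lia)). pose proof (IHk ltac:(auto)). lra. Qed.
Lemma sumR_upd k j c f : (j < k)%nat ->
  sumR k (fun i => if Nat.eqb i j then f i + c else f i) = sumR k f + c.
Proof.
  induction k; simpl; intros H; [lia|].
  destruct (Nat.eqb_spec k j).
  - subst. rewrite (sumR_ext _ _ f); [ring|]. intros i Hi. destruct (Nat.eqb_spec i j); auto; lia.
  - rewrite IHk; [ring|lia].
Qed.

Section Sum.
Context {L : Language} (U : Structure L).

Lemma sep_fin m (q : nat -> ((nat -> U) -> Prop) -> Prop) qk : forall k',
  (forall j, (j < k')%nat -> is_type (fullset U) m (q j)) -> is_type (fullset U) m qk ->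
  (forall j, (j < k')%nat -> exists X, definable (fullset U) m X /\ q j X /\ qk (fun a => ~ X a)) ->
  exists Y, definable (fullset U) m Y /\ (forall j, (j < k')%nat -> q j Y) /\ qk (fun a => ~ Y a).
Proof.
  intros k' Hq Hqk. induction k' as [|k' IH]; intros H.
  - exists (fun _ => False). split; [apply def_false|]. split; [intros; lia|].
    destruct Hqk as [_ [T2 [_ [_ [T5 _]]]]]. apply (T5 _ _ T2); [apply def_not, def_false|tauto].
  - destruct IH as [Y [HY [HqY HkY]]]; [intros; apply Hq; lia|intros; apply H; lia|].
    destruct (H k' ltac:(lia)) as [X [HX [HqX HkX]]].
    exists (fun a => Y a \/ X a). split; [apply def_or; auto|]. split.
    + intros j Hj. destruct (Nat.eq_dec j k').
      * subst. destruct (Hq k' ltac:(lia)) as [_ [_ [_ [_ [T5 _]]]]].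
        apply (T5 X); [auto|apply def_or; auto|intros a Ha; auto].
      * destruct (Hq j ltac:(lia)) as [_ [_ [_ [_ [T5 _]]]]].
        apply (T5 Y); [apply HqY; lia|apply def_or; auto|intros a Ha; auto].
    + destruct Hqk as [_ [_ [_ [T4 [T5 _]]]]].
      apply (T5 _ _ (T4 _ _ HkY HkX)); [apply def_not, def_or; auto|tauto].
Qed.

Lemma SUM (A : U -> Prop) n m p (q : nat -> ((nat -> U) -> Prop) -> Prop) : forall k w,
  (forall i, (i < k)%nat -> is_type (fullset U) m (q i)) ->
  (forall i, (i < k)%nat -> forall C : U -> Prop, (forall u, A u -> C u) ->
     E_ge C n m (dirac p) (dirac (q i))) ->
  (forall i, (i < k)%nat -> 0 <= w i) -> sumR k w = 1 ->
  exists b : list U, E_ge (fun u => A u \/ In u b) n m (dirac p)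
      (fun D => sumR k (fun i => w i * dirac (q i) D)).
Proof.
  induction k as [|k IH]; intros w Hq HE Hw Hsum.
  { simpl in Hsum. lra. }
  simpl in Hsum.
  assert (Hnn : 0 <= sumR k w) by (apply sumR_nn; intros; apply Hw; lia).
  assert (Hwk := Hw k ltac:(lia)).
  destruct (Req_dec (w k) 1) as [wk1|wk1].
  - exists nil. eapply E_ge_target; [|apply (HE k ltac:(lia)); intros; left; auto].
    intros D HD. simpl.
    assert (sumR k (fun i => w i * dirac (q i) D) <= sumR k w).
    { apply sumR_le. intros i Hi. pose proof (dirac_bounds U (q i) D). pose proof (Hw i ltac:(lia)). nra. }
    assert (0 <= sumR k (fun i => w i * dirac (q i) D)).
    { apply sumR_nn. intros i Hi. pose proof (dirac_bounds U (q i) D). pose proof (Hw i ltac:(lia)). nra. }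
    rewrite wk1. lra.
  - destruct (classic (exists j, (j < k)%nat /\ forall E, definable (fullset U) m E -> (q j E <-> q k E)))
      as [[j [Hj Heq]]|Hnd].
    + set (w' := fun i => if Nat.eqb i j then w i + w k else w i).
      destruct (IH w') as [b Hb].
      * intros; apply Hq; lia.
      * intros i Hi; apply HE; lia.
      * intros i Hi; unfold w'. destruct (Nat.eqb i j); pose proof (Hw i ltac:(lia)); lra.
      * unfold w'. rewrite sumR_upd; auto.
      * exists b. eapply E_ge_target; [|exact Hb]. intros D HD. simpl.
        rewrite (sumR_ext k _ (fun i => if Nat.eqb i j then w i * dirac (q i) D + w k * dirac (q j) D
                                       else w i * dirac (q i) D)).
        -- rewrite sumR_upd; auto. f_equal. f_equal.
           destruct (classic (q j D)) as [qj|nqj].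
           ++ rewrite !dirac_1; auto. apply Heq; auto.
           ++ rewrite !dirac_0; auto. rewrite <- Heq; auto.
        -- intros i Hi. unfold w'. destruct (Nat.eqb_spec i j); [subst; ring|auto].
    + assert (Hsep : forall j, (j < k)%nat -> exists X, definable (fullset U) m X /\ q j X /\ q k (fun a => ~ X a)).
      { intros j Hj. apply NNPP; intro Hno. apply Hnd. exists j. split; auto.
        intros E HE'. destruct (Hq j ltac:(lia)) as [A1 [A2 [A3 [A4 [A5 A6]]]]].
        destruct (Hq k ltac:(lia)) as [B1 [B2 [B3 [B4 [B5 B6]]]]].
        split; intros H.
        - destruct (B6 E HE') as [|Hn]; auto. exfalso. apply Hno. exists E. auto.
        - destruct (A6 E HE') as [|Hn]; auto. exfalso. apply Hno. exists (fun a => ~ E a).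
          split; [apply def_not; auto|]. split; auto.
          apply (B5 E); [auto|apply def_not, def_not; auto|intros a Ha Hb; auto]. }
      destruct (sep_fin m q (q k) k) as [Y [HY [HqY HkY]]];
        [intros; apply Hq; lia|apply Hq; lia|exact Hsep|].
      assert (nqY : ~ q k Y).
      { intros qY. destruct (Hq k ltac:(lia)) as [_ [_ [B3 [B4 _]]]].
        destruct (B3 _ (B4 _ _ qY HkY)) as [a [Ha1 Ha2]]; auto. }
      assert (Hpos : 0 < 1 - w k) by lra.
      set (w'' := fun i => w i / (1 - w k)).
      destruct (IH w'') as [b1 Hb1].
      * intros; apply Hq; lia.
      * intros i Hi; apply HE; lia.
      * intros i Hi; unfold w''. pose proof (Hw i ltac:(lia)). apply Rmult_le_pos; auto.
        left; apply Rinv_0_lt_compat; auto.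
      * unfold w''. rewrite (sumR_ext k _ (fun i => / (1 - w k) * w i)) by (intros; unfold Rdiv; ring).
        rewrite sumR_scale. replace (sumR k w) with (1 - w k) by lra. field; lra.
      * destruct (BL U (fun u => A u \/ In u b1) n m p
                   (fun D => sumR k (fun i => w'' i * dirac (q i) D)) (dirac (q k))
                   (1 - w k) (w k)) as [b2 Hb2];
          [lra|lra|lra| |exact Hb1|apply HE; [lia|]; intros u Hu; left; auto|].
        -- exists Y. split; auto. split.
           ++ rewrite (sumR_ext k _ w''). 2:{ intros i Hi. rewrite dirac_1; auto. ring. }
              unfold w''. rewrite (sumR_ext k _ (fun i => / (1 - w k) * w i)) by (intros; unfold Rdiv; ring).
              rewrite sumR_scale. replace (sumR k w) with (1 - w k) by lra. field; lra.
           ++ apply dirac_0; auto.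
        -- exists (b1 ++ b2). eapply E_ge_equiv; [|eapply E_ge_target; [|exact Hb2]].
           ++ intros u. rewrite in_app_iff. tauto.
           ++ intros D HD. simpl. unfold w''.
              rewrite (sumR_ext k _ (fun i => / (1 - w k) * (w i * dirac (q i) D))) by (intros; unfold Rdiv; ring).
              rewrite sumR_scale. field. lra.
Qed.

End Sum.

Theorem corollary5p10 (L : Language) (T : formula L -> Prop) (U : Structure L)
  (K : Type) (A : U -> Prop) :
  monster T U K -> small K A ->
  (forall (n m : nat) (r s : R) (p : ((nat -> U) -> Prop) -> Prop)
     (nu1 nu2 : ((nat -> U) -> Prop) -> R),
     0 <= r -> 0 <= s -> r + s = 1 ->
     is_type (fullset U) n p ->
     is_measure (fullset U) m nu1 -> is_measure (fullset U) m nu2 ->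
     ~ (exists q, in_supp m nu1 q /\ in_supp m nu2 q) ->
     E_ge A n m (dirac p) nu1 -> E_ge A n m (dirac p) nu2 ->
     exists b : list U,
       E_ge (fun u => A u \/ In u b) n m (dirac p)
            (fun D => r * nu1 D + s * nu2 D))
  /\
  (forall (n m k : nat) (p : ((nat -> U) -> Prop) -> Prop)
     (q : nat -> ((nat -> U) -> Prop) -> Prop) (w : nat -> R),
     is_type (fullset U) n p ->
     (forall i, (i < k)%nat -> is_type (fullset U) m (q i)) ->
     (forall i, (i < k)%nat -> D_ge A n m p (q i)) ->
     (forall i, (i < k)%nat -> 0 <= w i) -> sumR k w = 1 ->
     exists b : list U,
       E_ge (fun u => A u \/ In u b) n m (dirac p)
            (fun D => sumR k (fun i => w i * dirac (q i) D))).
Proof.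
  intros _ _. split.
  - intros n m r s p nu1 nu2 Hr Hs Hrs Hp Hn1 Hn2 Hsupp HE1 HE2.
    apply (BL U A n m p nu1 nu2 r s); auto. apply sep; auto.
  - intros n m k p q w Hp Hq HD Hw Hsum.
    destruct (classic (exists i r, (i < k)%nat /\ is_type A (n+m) r /\
        (forall D, definable A n D -> p D -> r D) /\
        ~ exists om, is_measure (fullset U) (n+m) om /\ meas_eq_on A (n+m) om (dirac r) /\
                     meas_eq_on (fullset U) n om (dirac p)))
      as [[i [r [Hi [Hr [Hpr Hno]]]]]|Hall].
    + exists nil. apply (E_ge_equiv U A); [intros; simpl; tauto|].
      exists (dirac r). split; [apply dirac_type_meas; auto|split].
      * intros D HD0. destruct (classic (p D)) as [pD|npD].
        -- rewrite !dirac_1; auto.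
        -- rewrite !dirac_0; auto. intros rD.
           destruct Hp as [_ [_ [_ [_ [_ P6]]]]].
           destruct (P6 D (def_full U _ _ _ HD0)) as [|pnD]; [contradiction|].
           assert (rnD : r (fun a => ~ D a)) by (apply Hpr; auto; apply def_not; auto).
           destruct Hr as [_ [_ [R3 [R4 _]]]].
           destruct (R3 _ (R4 _ _ rD rnD)) as [a [Ha1 Ha2]]; auto.
      * intros om Hom Hext Hm. exfalso. apply Hno. exists om. auto.
    + apply (SUM U A n m p q k w); auto.
      intros i Hi C HC. destruct (HD i Hi) as [r [Hr [Hpr Hqr]]].
      destruct (classic (exists om, is_measure (fullset U) (n+m) om /\ meas_eq_on A (n+m) om (dirac r) /\
                     meas_eq_on (fullset U) n om (dirac p))) as [[om [Hom [He Hm]]]|Hn].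
      * apply (DE' U A n m p (q i) r om); auto.
      * exfalso. apply Hall. exists i, r. auto.
Qed.
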